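(* Let $N\ge 2$ and let $c_2,\dots,c_N>0$ be real numbers; set $c_1=1$ and let $\Lambda_{\mathbf c}=\mathbb{Z}\oplus c_2\mathbb{Z}\oplus\cdots\oplus c_N\mathbb{Z}\subset\mathbb{R}^N$. Let $\Lambda\subset\mathbb{R}^{N-1}$ be a full-rank lattice, and let $L^*=(l^*_{ij})_{1\le i,j\le N-1}$ be a lower triangular generator matrix (rows are basis vectors) of the dual lattice $\Lambda^*$. For $w\in\mathbb{N}$ let $L_w^*$ be the $(N-1)\times N$ real matrix with entries $$(L_w^* )_{ij}=\frac{\lfloor w\,c_j\,l^*_{ij}\rfloor}{c_j}\ \ (1\le j\le i),\qquad (L_w^* )_{i,i+1}=\frac{1}{c_{i+1}},\qquad (L_w^* )_{ij}=0\ \ (j\ge i+2),$$ for $i=1,\dots,N-1$, and let $\Lambda_w^*$ be the lattice generated by its rows. Then: (i) for each $w$ there exist integers $u_2,\dots,u_N$ such that, with $\hat{\mathbf u}=(1,u_2c_2,\dots,u_Nc_N)$, the lattice $\Lambda_w^*$ equals the dual lattice $\big(P_{\hat{\mathbf u}^\perp}(\Lambda_{\mathbf c})\big)^*$ of the orthogonal projection of $\Lambda_{\mathbf c}$ onto the hyperplane $\hat{\mathbf u}^\perp$; equivalently, $\Lambda_w^*$ is also generated by the rows of the matrix whose $(i-1)$-th row is $-u_i\mathbf e_1+\frac{1}{c_i}\mathbf e_i$, $i=2,\dots,N$ (with $\mathbf e_k$ the standard basis of $\mathbb{R}^N$); (ii) $\frac{1}{w^2}L_w^*(L_w^* )^t\to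 L^*(L^* )^t$ as $w\to\infty$.
   Context: For a lattice $\Gamma\subset\mathbb{R}^N$, its dual is $\Gamma^*=\{\mathbf x\in\operatorname{span}(\Gamma):\langle\mathbf x,\mathbf y\rangle\in\mathbb{Z}\ \forall\mathbf y\in\Gamma\}$, where $\operatorname{span}(\Gamma)$ is the real subspace spanned by $\Gamma$. For a nonzero vector $\hat{\mathbf u}\in\mathbb{R}^N$, $P_{\hat{\mathbf u}^\perp}(\mathbf n)=\mathbf n\big(I_N-\frac{\hat{\mathbf u}^t\hat{\mathbf u}}{\hat{\mathbf u}\hat{\mathbf u}^t}\big)$ (row vectors) is the orthogonal projection onto the hyperplane orthogonal to $\hat{\mathbf u}$; $P_{\hat{\mathbf u}^\perp}(\Lambda_{\mathbf c})$ denotes the image of $\Lambda_{\mathbf c}$ under this projection (a lattice in $\hat{\mathbf u}^\perp$ for $\hat{\mathbf u}$ of the given form). $\lfloor\cdot\rfloor$ is the floor function. *)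

(* Defs.v *)
From Stdlib Require Import Reals ZArith Lra Lia.
Open Scope R_scope.

(* Vectors of R^n are represented as functions nat -> R, of which only the
   coordinates 1..n are meaningful; all notions below only inspect the
   coordinates 1..n. Matrices are functions nat -> nat -> R (row, column),
   1-based. *)
Definition vec := nat -> R.

Fixpoint sum1 (n : nat) (f : nat -> R) : R :=
  match n with
  | O => 0
  | S m => sum1 m f + f (S m)
  end.

Definition dot (n : nat) (x y : vec) : R := sum1 n (fun k => x k * y k).

Definition floor (x : R) : Z := Int_part x.

Definition lat_gen (n m : nat) (B : nat -> vec) (x : vec) : Prop :=
  exists z : nat -> Z,
    forall k, (1 <= k <= n)%nat -> x k = sum1 m (fun i => IZR (z i) * B i k).

Definition in_span (n : nat) (G : vec -> Prop) (x : vec) : Prop :=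
  exists (m : nat) (a : nat -> R) (g : nat -> vec),
    (forall i, G (g i)) /\
    forall k, (1 <= k <= n)%nat -> x k = sum1 m (fun i => a i * g i k).

Definition dual (n : nat) (G : vec -> Prop) (x : vec) : Prop :=
  in_span n G x /\ forall y, G y -> exists z : Z, dot n x y = IZR z.

Definition proj_perp (n : nat) (u v : vec) : vec :=
  fun k => v k - dot n v u / dot n u u * u k.

Definition proj_img (n : nat) (u : vec) (G : vec -> Prop) (x : vec) : Prop :=
  exists v, G v /\ forall k, (1 <= k <= n)%nat -> x k = proj_perp n u v k.

Definition set_eq (P Q : vec -> Prop) : Prop := forall x, P x <-> Q x.

Definition Lambda_c_basis (c : nat -> R) : nat -> vec :=
  fun i k => if Nat.eqb k i then c i else 0.

Definition Lw (c : nat -> R) (Ls : nat -> nat -> R) (w : nat) : nat -> vec :=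
  fun i j =>
    if Nat.leb j i then IZR (floor (INR w * c j * Ls i j)) / c j
    else if Nat.eqb j (S i) then 1 / c (S i)
    else 0.

(* the alternative generator matrix: row (i-1) is -u_i e_1 + (1/c_i) e_i,
   i = 2..N; i.e. row r (r = 1..N-1) is -u_{r+1} e_1 + (1/c_{r+1}) e_{r+1} *)
Definition Umat (c : nat -> R) (u : nat -> Z) : nat -> vec :=
  fun r k =>
    (if Nat.eqb k 1 then - IZR (u (S r)) else 0)
    + (if Nat.eqb k (S r) then 1 / c (S r) else 0).

(* Main.v *)
Require Import Defs.
From Stdlib Require Import Reals ZArith Lra Lia.
Open Scope R_scope.

Lemma sum1_ext n f g : (forall k, (1 <= k <= n)%nat -> f k = g k) -> sum1 n f = sum1 n g.
Proof. induction n; simpl; intros H; auto. rewrite IHn; [rewrite H; [reflexivity|lia]|].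
intros; apply H; lia. Qed.

Lemma sum1_plus n f g : sum1 n (fun k => f k + g k) = sum1 n f + sum1 n g.
Proof. induction n; simpl; [lra|rewrite IHn; lra]. Qed.

Lemma sum1_scal n a f : sum1 n (fun k => a * f k) = a * sum1 n f.
Proof. induction n; simpl; [lra|rewrite IHn; lra]. Qed.

Lemma sum1_zero n f : (forall k, (1 <= k <= n)%nat -> f k = 0) -> sum1 n f = 0.
Proof. induction n; simpl; intros H; [lra|]. rewrite IHn, H; [lra|lia|]. intros; apply H; lia. Qed.

Lemma sum1_delta n r f : (1 <= r <= n)%nat ->
  sum1 n (fun i => if Nat.eqb i r then f i else 0) = f r.
Proof. induction n; intros H; [lia|]. cbn [sum1].
destruct (Nat.eqb_spec (S n) r).
- subst. rewrite sum1_zero; [lra|]. intros k Hk. destruct (Nat.eqb_spec k (S n)); [lia|auto].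
- rewrite IHn; [lra|lia]. Qed.

Lemma sum1_swap n m (f : nat -> nat -> R) :
  sum1 n (fun k => sum1 m (fun i => f i k)) = sum1 m (fun i => sum1 n (fun k => f i k)).
Proof. induction n; simpl.
- symmetry; apply sum1_zero; auto.
- rewrite IHn, <- sum1_plus. reflexivity. Qed.

Lemma sum1_int n f : (forall k, (1 <= k <= n)%nat -> exists z, f k = IZR z) ->
  exists z, sum1 n f = IZR z.
Proof. induction n; simpl; intros H.
- exists 0%Z; reflexivity.
- destruct IHn as [z1 H1]. intros; apply H; lia. destruct (H (S n)) as [z2 H2]; [lia|].
  exists (z1 + z2)%Z. rewrite plus_IZR; lra. Qed.

Lemma sum1_trunc n m f : (m <= n)%nat -> (forall k, (m < k <= n)%nat -> f k = 0) ->
  sum1 n f = sum1 m f.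
Proof. induction n; intros Hm H.
- replace m with 0%nat by lia; reflexivity.
- destruct (Nat.eq_dec m (S n)); [subst; reflexivity|].
  simpl. rewrite IHn, H; [lra|lia|lia|]. intros; apply H; lia. Qed.

Lemma dot_comb n m x (a : nat -> R) (g : nat -> vec) y :
  (forall k, (1 <= k <= n)%nat -> x k = sum1 m (fun i => a i * g i k)) ->
  dot n x y = sum1 m (fun i => a i * dot n (g i) y).
Proof. intros H. unfold dot.
rewrite (sum1_ext n _ (fun k => sum1 m (fun i => a i * (g i k * y k)))).
- rewrite sum1_swap. apply sum1_ext. intros; apply sum1_scal.
- intros k Hk. rewrite H by auto. rewrite Rmult_comm, <- sum1_scal.
  apply sum1_ext; intros; ring. Qed.

Lemma dot_sym n x y : dot n x y = dot n y x.
Proof. unfold dot; apply sum1_ext; intros; ring. Qed.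

Lemma dot_ext n x y y' : (forall k, (1 <= k <= n)%nat -> y k = y' k) -> dot n x y = dot n x y'.
Proof. intros H; unfold dot; apply sum1_ext; intros; rewrite H; auto. Qed.

Lemma lat_zero n m B x : (forall k, (1 <= k <= n)%nat -> x k = 0) -> lat_gen n m B x.
Proof. intros H. exists (fun _ => 0%Z). intros k Hk. rewrite H by auto.
symmetry; apply sum1_zero; intros; simpl; ring. Qed.

Lemma lat_add n m B x x' r t : lat_gen n m B x' -> (1 <= r <= m)%nat ->
  (forall k, (1 <= k <= n)%nat -> x k = x' k + IZR t * B r k) -> lat_gen n m B x.
Proof. intros [z Hz] Hr H.
exists (fun i => (z i + if Nat.eqb i r then t else 0)%Z). intros k Hk.
rewrite H, Hz by auto.
rewrite (sum1_ext m (fun i => IZR (z i + if Nat.eqb i r then t else 0) * B i k) (fun i => IZR (z i) * B i k + (if Nat.eqb i r then IZR t * B i k else 0))).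
- rewrite sum1_plus. rewrite (sum1_delta m r (fun i => IZR t * B i k)) by auto. reflexivity.
- intros i Hi. destruct (Nat.eqb i r); rewrite plus_IZR; simpl; ring. Qed.

Definition uhat_of (c : nat -> R) (u : nat -> Z) : vec :=
  fun k => if Nat.eqb k 1 then 1 else IZR (u k) * c k.

Definition Sset N c u (x : vec) : Prop :=
  (forall k, (1 <= k <= N)%nat -> exists z, x k * c k = IZR z) /\ dot N x (uhat_of c u) = 0.

Lemma S_comb N c u x y t : Sset N c u x -> Sset N c u y ->
  Sset N c u (fun k => x k - IZR t * y k).
Proof. intros [Hx1 Hx2] [Hy1 Hy2]. split.
- intros k Hk. destruct (Hx1 k Hk) as [a Ha]. destruct (Hy1 k Hk) as [b Hb].
  exists (a - t * b)%Z. rewrite minus_IZR, mult_IZR, <- Ha, <- Hb. ring.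
- unfold dot in *.
  rewrite (sum1_ext N _ (fun k => x k * uhat_of c u k + (- IZR t) * (y k * uhat_of c u k)))
    by (intros; ring).
  rewrite sum1_plus, sum1_scal, Hx2, Hy2. ring. Qed.

Lemma lat_in_S N m c u B x : (forall i, (1 <= i <= m)%nat -> Sset N c u (B i)) ->
  lat_gen N m B x -> Sset N c u x.
Proof. intros HB [z Hz]. split.
- intros k Hk. rewrite Hz by auto. rewrite Rmult_comm, <- sum1_scal.
  apply sum1_int. intros i Hi. destruct (proj1 (HB i Hi) k Hk) as [a Ha].
  exists (z i * a)%Z. rewrite mult_IZR, <- Ha. ring.
- rewrite (dot_comb N m x (fun i => IZR (z i)) B) by auto.
  apply sum1_zero. intros i Hi. rewrite (proj2 (HB i Hi)). ring. Qed.

Lemma tri_gen N c u R : (2 <= N)%nat -> c 1%nat = 1 ->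
  (forall r, (1 <= r <= N - 1)%nat -> Sset N c u (R r)) ->
  (forall r, (1 <= r <= N - 1)%nat -> R r (S r) * c (S r) = 1) ->
  (forall r k, (1 <= r <= N - 1)%nat -> (S r < k <= N)%nat -> R r k = 0) ->
  forall x, Sset N c u x -> lat_gen N (N - 1) R x.
Proof. intros HN Hc1 H1 H2 H3.
assert (Main : forall n, (n <= N - 1)%nat -> forall x, Sset N c u x ->
   (forall k, (S n < k <= N)%nat -> x k = 0) -> lat_gen N (N - 1) R x).
{ induction n; intros Hn x Hx Hsupp.
  - destruct Hx as [_ Hd]. unfold dot in Hd.
    rewrite (sum1_trunc N 1) in Hd; [|lia|].
    2:{ intros k Hk. rewrite Hsupp by lia. ring. }
    simpl in Hd. unfold uhat_of in Hd. simpl in Hd.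
    apply lat_zero. intros k Hk. destruct (Nat.eq_dec k 1).
    + subst. lra.
    + apply Hsupp; lia.
  - destruct (proj1 Hx (S (S n))) as [t Ht]; [lia|].
    apply (lat_add N (N-1)%nat R x (fun k => x k - IZR t * R (S n) k) (S n) t).
    + apply IHn; [lia| |].
      * apply S_comb; auto. apply H1; lia.
      * intros k Hk. destruct (Nat.eq_dec k (S (S n))).
        -- subst. rewrite <- Ht.
           replace (x (S (S n)) * c (S (S n)) * R (S n) (S (S n)))
             with (x (S (S n)) * (R (S n) (S (S n)) * c (S (S n)))) by ring.
           rewrite H2 by lia. ring.
        -- rewrite Hsupp, H3 by lia. ring.
    + lia.
    + intros; ring. }
intros x Hx. apply (Main (N - 1)%nat); auto. intros; lia. Qed.

Lemma sum1_ge n f : (forall k, 0 <= f k) -> (1 <= n)%nat -> f 1%nat <= sum1 n f.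
Proof. induction n; intros H Hn; [lia|]. cbn [sum1].
destruct (Nat.eq_dec n 0).
- subst. simpl. lra.
- specialize (IHn H ltac:(lia)). specialize (H (S n)). lra. Qed.

Lemma uu_pos N c u : (1 <= N)%nat -> 1 <= dot N (uhat_of c u) (uhat_of c u).
Proof. intros HN. unfold dot.
eapply Rle_trans; [|apply sum1_ge; auto]. unfold uhat_of; simpl; lra.
intros; apply Rle_0_sqr. Qed.

Lemma dot_proj n x uh v : dot n uh uh <> 0 ->
  dot n x (proj_perp n uh v) = dot n x v - (dot n v uh / dot n uh uh) * dot n x uh.
Proof. intros H. unfold proj_perp. unfold dot at 1.
rewrite (sum1_ext n _ (fun k => x k * v k + (- (dot n v uh / dot n uh uh)) * (x k * uh k)))
  by (intros; ring).
rewrite sum1_plus, sum1_scal. unfold dot. ring. Qed.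

Definition ek (c : nat -> R) (i : nat) : vec := fun k => if Nat.eqb k i then c i else 0.

Lemma ek_lat N c i : lat_gen N N (Lambda_c_basis c) (ek c i).
Proof. destruct (le_lt_dec 1 i); [destruct (le_lt_dec i N)|].
- exists (fun j => if Nat.eqb j i then 1%Z else 0%Z). intros k Hk.
  unfold ek, Lambda_c_basis.
  rewrite (sum1_ext N _ (fun j => if Nat.eqb j i then (if Nat.eqb k j then c j else 0) else 0)).
  + rewrite (sum1_delta N i (fun j => if Nat.eqb k j then c j else 0)) by lia. reflexivity.
  + intros j Hj. destruct (Nat.eqb j i); simpl; ring.
- apply lat_zero. intros k Hk. unfold ek. destruct (Nat.eqb_spec k i); [lia|auto].
- apply lat_zero. intros k Hk. unfold ek. destruct (Nat.eqb_spec k i); [lia|auto].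
Qed.

Lemma latc_coord N c v : lat_gen N N (Lambda_c_basis c) v ->
  exists z : nat -> Z, forall k, (1 <= k <= N)%nat -> v k = IZR (z k) * c k.
Proof. intros [z Hz]. exists z. intros k Hk. rewrite Hz by auto.
unfold Lambda_c_basis.
rewrite (sum1_ext N _ (fun j => if Nat.eqb j k then IZR (z j) * c j else 0)).
- apply sum1_delta; auto.
- intros j Hj. rewrite Nat.eqb_sym. destruct (Nat.eqb j k); ring. Qed.

Lemma dot_ek N c x i : (1 <= i <= N)%nat -> dot N x (ek c i) = x i * c i.
Proof. intros Hi. unfold dot, ek.
rewrite (sum1_ext N _ (fun k => if Nat.eqb k i then x k * c k else 0)).
- apply sum1_delta; auto.
- intros k Hk. destruct (Nat.eqb_spec k i); [subst|]; ring. Qed.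

Lemma dual_S N c u : (2 <= N)%nat -> c 1%nat = 1 ->
  (forall j, (2 <= j <= N)%nat -> 0 < c j) ->
  set_eq (dual N (proj_img N (uhat_of c u) (lat_gen N N (Lambda_c_basis c)))) (Sset N c u).
Proof. intros HN Hc1 Hcpos.
set (uh := uhat_of c u).
assert (Huu : dot N uh uh <> 0) by (pose proof (uu_pos N c u ltac:(lia)); unfold uh; lra).
assert (Hcnz : forall k, (1 <= k <= N)%nat -> c k <> 0).
{ intros k Hk. destruct (Nat.eq_dec k 1); [subst; lra|]. specialize (Hcpos k ltac:(lia)); lra. }
assert (Horth : forall v, dot N (proj_perp N uh v) uh = 0).
{ intros v. rewrite dot_sym, dot_proj by auto. rewrite (dot_sym N uh v). field; auto. }
intros x; split.
- intros [[m [a [g [Hg Hx]]]] Hint]. change (uhat_of c u) with uh in Hg, Hint |- *.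
  assert (Hxu : dot N x uh = 0).
  { rewrite (dot_comb N m x a g) by auto. apply sum1_zero. intros i Hi.
    destruct (Hg i) as [v [_ Hv]]. rewrite (dot_sym N (g i)), (dot_ext N uh _ _ Hv).
    rewrite dot_sym, Horth. ring. }
  split; [|exact Hxu].
  intros k Hk. destruct (Hint (proj_perp N uh (ek c k))) as [z Hz].
  + exists (ek c k). split; [apply ek_lat|auto].
  + exists z. rewrite <- Hz, dot_proj, dot_ek, Hxu by auto. ring.
- intros [Hint Hxu]. change (uhat_of c u) with uh in Hxu |- *. split.
  + exists N, (fun i => x i / c i), (fun i => proj_perp N uh (ek c i)). split.
    * intros i. exists (ek c i). split; [apply ek_lat|auto].
    * intros k Hk.
      rewrite (sum1_ext N _ (fun i => (if Nat.eqb i k then x i else 0)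
                 + (- (uh k / dot N uh uh)) * (x i * uh i))).
      -- rewrite sum1_plus, sum1_delta, sum1_scal by auto.
         fold (dot N x uh). rewrite Hxu. field; auto.
      -- intros i Hi. unfold proj_perp. rewrite (dot_sym N (ek c i)), dot_ek by auto.
         unfold ek. pose proof (Hcnz i Hi).
         destruct (Nat.eqb_spec k i); destruct (Nat.eqb_spec i k); try lia.
         ++ subst. field; auto.
         ++ field; auto.
  + intros y [v [Hv Hy]]. rewrite (dot_ext N x _ _ Hy), dot_proj, Hxu by auto.
    destruct (latc_coord N c v Hv) as [z Hz].
    destruct (sum1_int N (fun k => x k * v k)) as [s Hs].
    * intros k Hk. destruct (Hint k Hk) as [a Ha]. exists (a * z k)%Z.
      rewrite Hz, mult_IZR, <- Ha by auto. ring.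
    * exists s. unfold dot. rewrite Hs. ring.
Qed.

Fixpoint zsum1 (n : nat) (f : nat -> Z) : Z :=
  match n with O => 0%Z | S m => (zsum1 m f + f (S m))%Z end.

Lemma IZR_zsum1 n f : IZR (zsum1 n f) = sum1 n (fun k => IZR (f k)).
Proof. induction n; simpl; auto. rewrite plus_IZR, IHn; reflexivity. Qed.

Lemma zsum1_ext n f g : (forall k, (1 <= k <= n)%nat -> f k = g k) -> zsum1 n f = zsum1 n g.
Proof. induction n; simpl; intros H; auto. rewrite IHn, H; auto; try lia. intros; apply H; lia. Qed.

Lemma exists_u (g : (nat -> Z) -> nat -> Z) :
  (forall u u' r, (forall k, (k <= r)%nat -> u k = u' k) -> g u r = g u' r) ->
  forall n, exists u : nat -> Z, forall r, (1 <= r <= n)%nat -> u (S r) = g u r.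
Proof. intros Hloc. induction n.
- exists (fun _ => 0%Z). intros; lia.
- destruct IHn as [u Hu].
  exists (fun k => if Nat.eqb k (S (S n)) then g u (S n) else u k).
  intros r Hr. destruct (Nat.eqb_spec (S r) (S (S n))).
  + assert (r = S n) by lia. subst. apply Hloc. intros k Hk.
    destruct (Nat.eqb_spec k (S (S n))); [lia|auto].
  + rewrite Hu by lia. apply Hloc. intros k Hk.
    destruct (Nat.eqb_spec k (S (S n))); [lia|auto].
Qed.

Definition tZ (c : nat -> R) (Ls : nat -> nat -> R) (w : nat) (u : nat -> Z) (r : nat) : Z :=
  zsum1 r (fun k => Z.mul (Defs.floor (INR w * c k * Ls r k)) (if Nat.eqb k 1 then 1%Z else u k)).

Lemma part1 N c Ls w : (2 <= N)%nat -> c 1%nat = 1 ->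
  (forall j, (2 <= j <= N)%nat -> 0 < c j) ->
  exists u : nat -> Z,
   set_eq (lat_gen N (N - 1) (Lw c Ls w))
          (dual N (proj_img N (uhat_of c u) (lat_gen N N (Lambda_c_basis c)))) /\
   set_eq (lat_gen N (N - 1) (Lw c Ls w)) (lat_gen N (N - 1) (Umat c u)).
Proof. intros HN Hc1 Hcpos.
assert (Hcnz : forall k, (1 <= k <= N)%nat -> c k <> 0).
{ intros k Hk. destruct (Nat.eq_dec k 1); [subst; lra|]. specialize (Hcpos k ltac:(lia)); lra. }
destruct (exists_u (fun u r => (- tZ c Ls w u r)%Z)) with (n := (N - 1)%nat) as [u Hu].
{ intros u u' r H. unfold tZ. f_equal. apply zsum1_ext. intros k Hk.
  rewrite H by lia. reflexivity. }
exists u.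
assert (L1 : forall r, (1 <= r <= N - 1)%nat -> Sset N c u (Lw c Ls w r)).
{ intros r Hr. split.
    + intros k Hk. unfold Lw. destruct (Nat.leb_spec k r).
      * exists (Defs.floor (INR w * c k * Ls r k)). field. apply Hcnz; lia.
      * destruct (Nat.eqb_spec k (S r)).
        -- exists 1%Z. subst. field. apply Hcnz; lia.
        -- exists 0%Z. ring.
    + unfold dot. rewrite (sum1_trunc N (S r)); [|lia|].
      2:{ intros k Hk. unfold Lw. destruct (Nat.leb_spec k r); [lia|].
          destruct (Nat.eqb_spec k (S r)); [lia|ring]. }
      cbn [sum1].
      rewrite (sum1_ext r _ (fun k => IZR (Z.mul (Defs.floor (INR w * c k * Ls r k)) (if Nat.eqb k 1 then 1%Z else u k)))).
      * rewrite <- IZR_zsum1. fold (tZ c Ls w u r).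
        unfold Lw. replace (Nat.leb (S r) r) with false by (symmetry; apply Nat.leb_gt; lia). rewrite Nat.eqb_refl.
        unfold uhat_of. destruct (Nat.eqb_spec (S r) 1); [lia|].
        rewrite Hu by lia. rewrite opp_IZR. field. apply Hcnz; lia.
      * intros k Hk. unfold Lw, uhat_of. destruct (Nat.leb_spec k r); [|lia].
        rewrite mult_IZR. destruct (Nat.eqb_spec k 1).
        -- subst. rewrite Hc1. simpl. field.
        -- field. apply Hcnz; lia.
  }
assert (L2 : forall r, (1 <= r <= N - 1)%nat -> Lw c Ls w r (S r) * c (S r) = 1).
{ intros r Hr. unfold Lw. replace (Nat.leb (S r) r) with false by (symmetry; apply Nat.leb_gt; lia).
  rewrite Nat.eqb_refl. field. apply Hcnz; lia. }
assert (L3 : forall r k, (1 <= r <= N - 1)%nat -> (S r < k <= N)%nat -> Lw c Ls w r k = 0).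
{ intros r k Hr Hk. unfold Lw. destruct (Nat.leb_spec k r); [lia|].
    destruct (Nat.eqb_spec k (S r)); [lia|reflexivity]. }
assert (HLw : set_eq (lat_gen N (N - 1) (Lw c Ls w)) (Sset N c u)).
{ intros x; split; intros H; [apply (lat_in_S N (N-1)%nat c u (Lw c Ls w)); auto|apply (tri_gen N c u); auto]. }
assert (U1 : forall r, (1 <= r <= N - 1)%nat -> Sset N c u (Umat c u r)).
{ intros r Hr. split.
    + intros k Hk. unfold Umat. destruct (Nat.eqb_spec k 1); destruct (Nat.eqb_spec k (S r)); try lia.
      * subst. exists (- u (S r))%Z. rewrite Hc1, opp_IZR. ring.
      * exists 1%Z. subst. field. apply Hcnz; lia.
      * exists 0%Z. ring.
    + unfold dot.
      rewrite (sum1_ext N _ (fun k => (if Nat.eqb k 1 then - IZR (u (S r)) else 0)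
                  + (if Nat.eqb k (S r) then 1 / c k * (IZR (u k) * c k) else 0))).
      * rewrite sum1_plus, sum1_delta, sum1_delta by lia. field. apply Hcnz; lia.
      * intros k Hk. unfold Umat, uhat_of.
        destruct (Nat.eqb_spec k 1); destruct (Nat.eqb_spec k (S r)); try lia; subst; ring.
  }
assert (U2 : forall r, (1 <= r <= N - 1)%nat -> Umat c u r (S r) * c (S r) = 1).
{ intros r Hr. unfold Umat. destruct (Nat.eqb_spec (S r) 1); [lia|]. rewrite Nat.eqb_refl. field.
    apply Hcnz; lia. }
assert (U3 : forall r k, (1 <= r <= N - 1)%nat -> (S r < k <= N)%nat -> Umat c u r k = 0).
{ intros r k Hr Hk. unfold Umat. destruct (Nat.eqb_spec k 1); [lia|].
    destruct (Nat.eqb_spec k (S r)); [lia|ring]. }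
assert (HU : set_eq (lat_gen N (N - 1) (Umat c u)) (Sset N c u)).
{ intros x; split; intros H; [apply (lat_in_S N (N-1)%nat c u (Umat c u)); auto|apply (tri_gen N c u); auto]. }
pose proof (dual_S N c u HN Hc1 Hcpos) as HD.
split; intros x; specialize (HLw x); [specialize (HD x)|specialize (HU x)]; tauto.
Qed.

Lemma INR_Z_to_nat_ge z : IZR z <= INR (Z.to_nat z).
Proof. destruct (Z_lt_le_dec z 0).
- pose proof (pos_INR (Z.to_nat z)). apply IZR_lt in l. lra.
- rewrite INR_IZR_INZ, Z2Nat.id by auto. lra. Qed.

Lemma cv_bound (u : nat -> R) l K :
  (forall n, (1 <= n)%nat -> Rabs (u n - l) <= K / INR n) -> Un_cv u l.
Proof. intros H eps Heps.
destruct (archimed (K / eps)) as [Hup _].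
exists (S (Z.to_nat (up (K / eps)))). intros n Hn.
unfold R_dist. eapply Rle_lt_trans; [apply H; lia|].
pose proof (INR_Z_to_nat_ge (up (K / eps))).
assert (Hn' : INR (S (Z.to_nat (up (K / eps)))) <= INR n) by (apply le_INR; lia).
rewrite S_INR in Hn'.
assert (Hpos : 0 < INR n) by (pose proof (pos_INR (Z.to_nat (up (K / eps)))); lra).
assert (K / eps < INR n) by lra.
apply (Rmult_lt_reg_r (INR n)); auto.
unfold Rdiv at 1. rewrite Rmult_assoc, Rinv_l by lra.
apply (Rmult_lt_compat_r eps) in H1; auto.
unfold Rdiv in H1. rewrite Rmult_assoc, Rinv_l in H1 by lra. lra. Qed.

Lemma Un_cv_ext1 (u v : nat -> R) l : (forall n, (1 <= n)%nat -> u n = v n) ->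
  Un_cv v l -> Un_cv u l.
Proof. intros H Hv eps Heps. destruct (Hv eps Heps) as [N0 HN0].
exists (S N0). intros n Hn. rewrite H by lia. apply HN0; lia. Qed.

Lemma sum1_cv n (f : nat -> nat -> R) l :
  (forall k, (1 <= k <= n)%nat -> Un_cv (fun w => f w k) (l k)) ->
  Un_cv (fun w => sum1 n (f w)) (sum1 n l).
Proof. induction n; intros H.
- intros eps Heps. exists 0%nat. intros. simpl. unfold R_dist.
  rewrite Rminus_diag, Rabs_R0; auto.
- cbn [sum1]. apply CV_plus.
  + apply IHn. intros; apply H; lia.
  + apply H; lia. Qed.

Definition Lim (Ls : nat -> nat -> R) i k := if Nat.leb k i then Ls i k else 0.

Lemma comp_cv N c Ls i k : c 1%nat = 1 -> (forall j, (2 <= j <= N)%nat -> 0 < c j) ->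
  (1 <= i <= N - 1)%nat -> (1 <= k <= N)%nat ->
  Un_cv (fun w => Lw c Ls w i k / INR w) (Lim Ls i k).
Proof. intros Hc1 Hcpos Hi Hk.
assert (Hc : 0 < c k) by (destruct (Nat.eq_dec k 1); [subst; lra|apply Hcpos; lia]).
unfold Lw, Lim. destruct (Nat.leb_spec k i).
- apply (cv_bound _ _ (1 / c k)). intros n Hn.
  assert (HW : 0 < INR n) by (apply lt_0_INR; lia).
  destruct (base_Int_part (INR n * c k * Ls i k)) as [Hb1 Hb2].
  unfold Defs.floor. set (F := IZR (Int_part (INR n * c k * Ls i k))) in *.
  replace (F / c k / INR n - Ls i k) with ((F - INR n * c k * Ls i k) * / (c k * INR n))
    by (field; lra).
  replace (1 / c k / INR n) with (1 * / (c k * INR n)) by (field; lra).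
  rewrite Rabs_mult, (Rabs_pos_eq (/ (c k * INR n))).
  + apply Rmult_le_compat_r.
    * left. apply Rinv_0_lt_compat, Rmult_lt_0_compat; auto.
    * apply Rabs_le. lra.
  + left. apply Rinv_0_lt_compat, Rmult_lt_0_compat; auto.
- destruct (Nat.eqb_spec k (S i)).
  + apply (cv_bound _ _ (1 / c k)). intros n Hn. subst.
    assert (HW : 0 < INR n) by (apply lt_0_INR; lia).
    rewrite Rminus_0_r, Rabs_pos_eq. lra.
    unfold Rdiv. rewrite Rmult_1_l. left. apply Rmult_lt_0_compat; apply Rinv_0_lt_compat; auto.
  + apply (cv_bound _ _ 0). intros m Hm. unfold Rdiv. rewrite !Rmult_0_l, Rminus_0_r, Rabs_R0. lra.
Qed.

Lemma part2 N c Ls : (2 <= N)%nat -> c 1%nat = 1 -> (forall j, (2 <= j <= N)%nat -> 0 < c j) ->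
  (forall i j, (1 <= i)%nat -> (i < j)%nat -> (j <= N - 1)%nat -> Ls i j = 0) ->
  forall i j, (1 <= i <= N - 1)%nat -> (1 <= j <= N - 1)%nat ->
     Un_cv (fun w : nat => / (INR w ^ 2) * dot N (Lw c Ls w i) (Lw c Ls w j))
           (dot (N - 1) (Ls i) (Ls j)).
Proof. intros HN Hc1 Hcpos Htri i j Hi Hj.
replace (dot (N - 1) (Ls i) (Ls j)) with (sum1 N (fun k => Lim Ls i k * Lim Ls j k)).
- apply (Un_cv_ext1 _ (fun w => sum1 N (fun k => Lw c Ls w i k / INR w * (Lw c Ls w j k / INR w)))).
  + intros n Hn. assert (0 < INR n) by (apply lt_0_INR; lia).
    unfold dot. rewrite <- sum1_scal. apply sum1_ext. intros; field. lra.
  + apply (sum1_cv N (fun w k => Lw c Ls w i k / INR w * (Lw c Ls w j k / INR w))).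
    intros k Hk. apply CV_mult; apply (comp_cv N); auto.
- assert (HN1 : N = S (N - 1)) by lia.
  transitivity (sum1 (S (N - 1)) (fun k => Lim Ls i k * Lim Ls j k)); [rewrite <- HN1; reflexivity|].
  cbn [sum1]. unfold Lim at 2 3.
  replace (Nat.leb (S (N - 1)) i) with false by (symmetry; apply Nat.leb_gt; lia).
  rewrite Rmult_0_l, Rplus_0_r. unfold dot. apply sum1_ext. intros k Hk.
  unfold Lim. destruct (Nat.leb_spec k i); destruct (Nat.leb_spec k j); try reflexivity.
  + rewrite (Htri j k) by lia. ring.
  + rewrite (Htri i k) by lia. ring.
  + rewrite (Htri i k), (Htri j k) by lia. ring.
Qed.

Theorem theorem1
  (N : nat) (HN : (2 <= N)%nat)
  (c : nat -> R) (Hc1 : c 1%nat = 1)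
  (Hcpos : forall j, (2 <= j <= N)%nat -> 0 < c j)
  (B : nat -> nat -> R)
  (HB : forall a : nat -> R,
      (forall k, (1 <= k <= N - 1)%nat -> sum1 (N - 1) (fun i => a i * B i k) = 0) ->
      forall i, (1 <= i <= N - 1)%nat -> a i = 0)
  (Ls : nat -> nat -> R)
  (HLs_tri : forall i j, (1 <= i)%nat -> (i < j)%nat -> (j <= N - 1)%nat -> Ls i j = 0)
  (HLs_gen : set_eq (lat_gen (N - 1) (N - 1) Ls)
                    (dual (N - 1) (lat_gen (N - 1) (N - 1) B))) :
  (forall w : nat,
     exists u : nat -> Z,
       let uhat : vec := fun k => if Nat.eqb k 1 then 1 else IZR (u k) * c k in
       set_eq (lat_gen N (N - 1) (Lw c Ls w))
              (dual N (proj_img N uhat (lat_gen N N (Lambda_c_basis c)))) /\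
       set_eq (lat_gen N (N - 1) (Lw c Ls w))
              (lat_gen N (N - 1) (Umat c u)))
  /\
  (forall i j, (1 <= i <= N - 1)%nat -> (1 <= j <= N - 1)%nat ->
     Un_cv (fun w : nat => / (INR w ^ 2) * dot N (Lw c Ls w i) (Lw c Ls w j))
           (dot (N - 1) (Ls i) (Ls j))).
Proof.
split.
- intros w. exact (part1 N c Ls w HN Hc1 Hcpos).
- exact (part2 N c Ls HN Hc1 Hcpos HLs_tri).
Qed.
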